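(* Let $d\ge 1$ and let $R=(r_{i,j})_{1\le i,j\le d}$ be a real $d\times d$ matrix with all entries strictly positive and $r_{i,i}=1$ for all $i$. Define $l:\mathbb{R}^d\to\mathbb{R}$ by $l(\theta)=\sum_{1\le i,j\le d}(\theta_i-r_{i,j}\theta_j)^2$. Then every minimizer $\xi$ of $l$ over the unit sphere $\{\theta\in\mathbb{R}^d:\|\theta\|=1\}$ (Euclidean norm) has all its components nonzero and of the same sign. *)

(* Defs.v *)
From mathcomp Require Import all_boot all_order all_algebra.
From mathcomp Require Import reals.
Set Implicit Arguments. Unset Strict Implicit. Unset Printing Implicit Defensive.
Import Order.TTheory GRing.Theory Num.Theory.
Local Open Scope ring_scope.

Definition lossR (R : realType) (d : nat) (Rm : 'M[R]_d) (th : 'rV[R]_d) : R :=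
  \sum_(i < d) \sum_(j < d) (th ord0 i - Rm i j * th ord0 j) ^+ 2.

Definition eucl_norm (R : realType) (d : nat) (th : 'rV[R]_d) : R :=
  Num.sqrt (\sum_(i < d) th ord0 i ^+ 2).

Definition unit_sphere (R : realType) (d : nat) (th : 'rV[R]_d) : Prop :=
  eucl_norm th = 1.

Definition is_sphere_minimizer (R : realType) (d : nat) (Rm : 'M[R]_d)
  (xi : 'rV[R]_d) : Prop :=
  unit_sphere xi /\ forall th, unit_sphere th -> lossR Rm xi <= lossR Rm th.

(* Main.v *)
Require Import Defs.
From mathcomp Require Import all_boot all_order all_algebra.
From mathcomp Require Import reals.
From mathcomp Require Import ring lra.
Import Order.TTheory GRing.Theory Num.Theory.
Set Implicit Arguments. Unset Strict Implicit.
Local Open Scope ring_scope.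

Section Aux.
Variables (R : realType) (d : nat) (Rm : 'M[R]_d).

Definition SS (th : 'rV[R]_d) := \sum_(i < d) th ord0 i ^+ 2.

Lemma SS_ge0 th : 0 <= SS th.
Proof. by apply: sumr_ge0 => i _; apply: sqr_ge0. Qed.

Lemma lossZ c th : lossR Rm (c *: th) = c ^+ 2 * lossR Rm th.
Proof.
rewrite /lossR mulr_sumr; apply: eq_bigr => i _; rewrite mulr_sumr.
apply: eq_bigr => j _; rewrite !mxE; ring.
Qed.

Lemma SSZ c th : SS (c *: th) = c ^+ 2 * SS th.
Proof.
rewrite /SS mulr_sumr; apply: eq_bigr => i _; rewrite !mxE; ring.
Qed.

Definition BB (th v : 'rV[R]_d) := \sum_(i < d) \sum_(j < d)
  (th ord0 i - Rm i j * th ord0 j) * (v ord0 i - Rm i j * v ord0 j).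

Lemma lossD th v t : lossR Rm (th + t *: v) =
  lossR Rm th + 2 * t * BB th v + t ^+ 2 * lossR Rm v.
Proof.
rewrite /lossR /BB !mulr_sumr -!big_split; apply: eq_bigr => i _ /=.
rewrite !mulr_sumr -!big_split; apply: eq_bigr => j _ /=; rewrite !mxE; ring.
Qed.

Lemma SSD th v t : SS (th + t *: v) =
  SS th + 2 * t * (\sum_(i < d) th ord0 i * v ord0 i) + t ^+ 2 * SS v.
Proof.
rewrite /SS !mulr_sumr -!big_split; apply: eq_bigr => i _ /=; rewrite !mxE; ring.
Qed.

Lemma sum_delta (F : 'I_d -> R) k : \sum_(i < d) F i * ((i == k)%:R) = F k.
Proof.
rewrite (bigD1 k) //= eqxx mulr1 big1 ?addr0 // => i /negbTE ->.
by rewrite mulr0.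
Qed.

Lemma minS xi : is_sphere_minimizer Rm xi ->
  forall th, 0 < SS th -> lossR Rm xi * SS th <= lossR Rm th.
Proof.
move=> [_ hm] th hS.
set c := (Num.sqrt (SS th))^-1.
have sq : Num.sqrt (SS th) ^+ 2 = SS th by rewrite sqr_sqrtr // ltW.
have sqp : 0 < Num.sqrt (SS th) by rewrite sqrtr_gt0.
have c2 : c ^+ 2 * SS th = 1.
  by rewrite /c exprVn sq mulVf // gt_eqF.
have hu : unit_sphere (c *: th).
  by rewrite /unit_sphere /eucl_norm -/(SS _) SSZ c2 sqrtr1.
have := hm _ hu; rewrite lossZ => h.
have := ler_wpM2r (ltW hS) h.
by rewrite mulrAC c2 mul1r.
Qed.

Lemma sq_abs_diff (a b r : R) :
  (a - r * b) ^+ 2 - (`|a| - r * `|b|) ^+ 2 = 2 * r * (`|a| * `|b| - a * b).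
Proof.
rewrite !sqrrB !exprMn !real_normK ?num_real //; ring.
Qed.

End Aux.

Theorem mainTheorem2 (R : realType) (d : nat) (Rm : 'M[R]_d)
  (hd : (1 <= d)%N)
  (hpos : forall i j, 0 < Rm i j)
  (hdiag : forall i, Rm i i = 1)
  (xi : 'rV[R]_d) (hmin : is_sphere_minimizer Rm xi) :
  (forall i, 0 < xi ord0 i) \/ (forall i, xi ord0 i < 0).
Proof.
have hmin' := hmin; case: hmin => hS _.
have S1 : SS xi = 1.
  move: hS; rewrite /unit_sphere /eucl_norm -/(SS _) => h.
  by rewrite -(sqr_sqrtr (SS_ge0 xi)) h expr1n.
have prod : forall i j, 0 <= xi ord0 i * xi ord0 j.
  set a := \row_i `|xi ord0 i|.
  have Sa : SS a = 1.
    by rewrite -S1; apply: eq_bigr => i _; rewrite mxE real_normK ?num_real.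
  have := minS hmin' (th:=a); rewrite Sa mulr1 => /(_ ltr01) hle.
  pose f i j := (xi ord0 i - Rm i j * xi ord0 j) ^+ 2 - (a ord0 i - Rm i j * a ord0 j) ^+ 2.
  have fge0 : forall i j, 0 <= f i j.
    move=> i j; rewrite /f !mxE sq_abs_diff.
    apply: mulr_ge0; first by apply: mulr_ge0 => //; apply: ltW.
    by rewrite subr_ge0 -normrM ler_norm.
  have sumf : \sum_i \sum_j f i j = 0.
    apply/eqP; rewrite eq_le; apply/andP; split.
      rewrite /f; under eq_bigr do rewrite sumrB.
      by rewrite sumrB subr_le0.
    by apply: sumr_ge0 => i _; apply: sumr_ge0 => j _.
  move=> i j.
  have h0 : forall k, true -> 0 <= \sum_j f k j by move=> k _; apply: sumr_ge0 => l _.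
  have h1 := @psumr_eq0P _ _ _ _ h0 sumf i isT.
  have := @psumr_eq0P _ _ _ _ (fun j _ => fge0 i j) h1 j isT.
  rewrite /f !mxE sq_abs_diff => /eqP; rewrite mulf_eq0 => /orP [|].
    by rewrite mulf_eq0 (gt_eqF (hpos i j)) orbF pnatr_eq0.
  by rewrite subr_eq0 -normrM => /eqP <-.
have nz : forall k, xi ord0 k != 0.
  move=> k; apply/negP => /eqP xk0.
  have [m xm] : exists m, xi ord0 m != 0.
    apply/existsP; rewrite -negb_forall; apply/negP => /forallP h0.
    have : SS xi = 0 by rewrite /SS big1 // => i _; rewrite (eqP (h0 i)) expr0n.
    by rewrite S1 => /eqP; rewrite oner_eq0.
  set v := \row_i ((i == k)%:R : R).
  have Sv : SS v = 1.
    rewrite /SS; under eq_bigr do rewrite mxE expr2.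
    by rewrite sum_delta eqxx.
  have Xv : \sum_i xi ord0 i * v ord0 i = 0.
    under eq_bigr do rewrite mxE.
    by rewrite sum_delta.
  have G : BB Rm xi v = - \sum_j Rm k j * xi ord0 j - \sum_i xi ord0 i * Rm i k.
    rewrite /BB.
    transitivity (\sum_i ((\sum_j (xi ord0 i - Rm i j * xi ord0 j)) * (i == k)%:R)
       - \sum_i (xi ord0 i - Rm i k * xi ord0 k) * Rm i k).
      rewrite -sumrB; apply: eq_bigr => i _.
      have := sum_delta (fun j => (xi ord0 i - Rm i j * xi ord0 j) * Rm i j) k.
      rewrite /= => <-.
      rewrite mulr_suml -sumrB.
      apply: eq_bigr => j _; rewrite !mxE; ring.
    rewrite sum_delta xk0; congr (_ - _).
      by rewrite -sumrN; apply: eq_bigr => j _; ring.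
    by apply: eq_bigr => i _; ring.
  have hG : xi ord0 m * BB Rm xi v < 0.
    rewrite G mulrBr mulrN -opprD oppr_lt0 !mulr_sumr.
    have A : 0 <= \sum_i xi ord0 m * (xi ord0 i * Rm i k).
      apply: sumr_ge0 => i _; rewrite mulrA mulr_ge0 //; exact: ltW.
    have B : 0 < \sum_j xi ord0 m * (Rm k j * xi ord0 j).
      rewrite (bigD1 m) //=.
      have t1 : 0 < xi ord0 m * (Rm k m * xi ord0 m).
        rewrite mulrCA mulr_gt0 // -expr2 lt_def sqrf_eq0 xm sqr_ge0 //.
      have t2 : 0 <= \sum_(j | j != m) xi ord0 m * (Rm k j * xi ord0 j).
        apply: sumr_ge0 => j _; rewrite mulrCA mulr_ge0 //; exact: ltW.
      lra.
    lra.
  have ineq : forall t, lossR Rm xi * (1 + t ^+ 2) <=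
      lossR Rm xi + 2 * t * BB Rm xi v + t ^+ 2 * lossR Rm v.
    move=> t; have := minS hmin' (th := xi + t *: v).
    rewrite SSD S1 Xv Sv lossD mulr0 addr0 mulr1; apply.
    have := sqr_ge0 t; lra.
  set L := lossR Rm xi; set Bv := BB Rm xi v; set C := lossR Rm v.
  set K := C - L.
  set s := (`|K| + 1)^-1.
  have hK : 0 < `|K| + 1 by have := normr_ge0 K; lra.
  have hs : 0 < s by rewrite invr_gt0.
  have hs1 : s * (`|K| + 1) = 1 by rewrite mulVf // gt_eqF.
  have hsK : s * K <= 1.
    rewrite -hs1; apply: ler_wpM2l; first exact: ltW.
    have := ler_norm K; lra.
  have hB : 0 < Bv ^+ 2.
    rewrite lt_def sqrf_eq0 sqr_ge0 andbT; apply/eqP => hb.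
    by move: hG; rewrite -/Bv hb mulr0 ltxx.
  have P : 0 < Bv ^+ 2 * s by rewrite mulr_gt0.
  have := ineq (- Bv * s).
  have e : 2 * (- Bv * s) * Bv + (- Bv * s) ^+ 2 * C - L * (- Bv * s) ^+ 2
      = (Bv ^+ 2 * s) * (s * K - 2) by rewrite /K; ring.
  have hq : 0 <= 1 - s * K by lra.
  have Q := mulr_ge0 (ltW P) hq.
  move=> h.
  have : 0 <= (Bv ^+ 2 * s) * (s * K - 2).
    by rewrite -e; move: h; rewrite -/L -/Bv -/C mulrDr mulr1; lra.
  have : (Bv ^+ 2 * s) * (s * K - 2) = - (Bv ^+ 2 * s) - (Bv ^+ 2 * s) * (1 - s * K) by ring.
  lra.
have hi0 := nz (Ordinal hd).
have p0 : forall i, 0 < xi ord0 (Ordinal hd) * xi ord0 i.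
  by move=> i; rewrite lt_def mulf_eq0 negb_or hi0 nz prod.
case: (ltgtP (xi ord0 (Ordinal hd)) 0) => [hn|hp|he]; last by move: hi0; rewrite he eqxx.
  right => i; have := p0 i; by rewrite nmulr_rgt0.
left => i; have := p0 i; by rewrite pmulr_rgt0.
Qed.
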